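(* For integers $m\geq 5$ odd and $n\geq 3$, $\chi_{ld}(C_{m}[\overline{K_{n}}])=3$.
   Context: All graphs are finite, simple and undirected. For a graph $G=(V,E)$ of order $N$ without isolated vertices, a bijection $f\colon V\to\{1,2,\dots,N\}$ is a local distance antimagic labeling if $w(u)\neq w(v)$ for every edge $uv$, where $w(u)=\sum_{x\in N(u)}f(x)$ and $N(u)$ is the open neighborhood of $u$. $\chi_{ld}(G)$ is the minimum number of distinct weights over all local distance antimagic labelings of $G$. $C_m$ is the cycle on $m$ vertices, $\overline{K_n}$ the edgeless graph on $n$ vertices. The lexicographic product $G[H]$ has vertex set $V(G)\times V(H)$, with $(g,h)$ adjacent to $(g',h')$ iff $gg'\in E(G)$, or $g=g'$ and $hh'\in E(H)$. *)

(* Defs.v *)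
From mathcomp Require Import all_boot.
Set Implicit Arguments. Unset Strict Implicit. Unset Printing Implicit Defensive.

Definition cycle_rel (m : nat) : rel 'I_m :=
  fun i j => (val j == (val i).+1 %% m) || (val i == (val j).+1 %% m).

Definition empty_rel (n : nat) : rel 'I_n := fun _ _ => false.

Definition lex_prod (T1 T2 : finType) (G : rel T1) (H : rel T2) : rel (T1 * T2) :=
  fun x y => G x.1 y.1 || ((x.1 == y.1) && H x.2 y.2).

Definition weight (T : finType) (e : rel T) (f : T -> nat) (u : T) : nat :=
  \sum_(x : T | e u x) f x.

(* f is a bijection V -> {1,...,N}, N = |V|. *)
Definition is_labeling (T : finType) (f : T -> nat) : Prop :=
  injective f /\ (forall x, 0 < f x <= #|T|).

Definition ld_antimagic (T : finType) (e : rel T) (f : T -> nat) : Prop :=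
  is_labeling f /\ (forall u v, e u v -> weight e f u != weight e f v).

Definition num_weights (T : finType) (e : rel T) (f : T -> nat) : nat :=
  size (undup [seq weight e f u | u <- enum T]).

Definition chi_ld_eq (T : finType) (e : rel T) (k : nat) : Prop :=
  (exists f, ld_antimagic e f /\ num_weights e f = k) /\
  (forall f, ld_antimagic e f -> k <= num_weights e f).

(* Main.v *)
Require Import Defs.
From mathcomp Require Import all_boot zify.
Set Implicit Arguments. Unset Strict Implicit. Unset Printing Implicit Defensive.

Definition tau (p j : nat) :=
  if (j %% 4 == 0) && (j.+1 < (2*p).+1) then j.+1
  else if j %% 4 == 1 then j.-1 else j.

Lemma tau_lt p j : j < (2*p).+1 -> tau p j < (2*p).+1.
Proof. rewrite /tau; repeat case: ifP; lia. Qed.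

Lemma tau_inv p j : j < (2*p).+1 -> tau p (tau p j) = j.
Proof. rewrite /tau; repeat case: ifP; lia. Qed.

Lemma tau_ge p j : j <= (tau p j).+1.
Proof. rewrite /tau; repeat case: ifP; lia. Qed.

Definition hodd p a j :=
  if a == 0 then tau p j
  else if a == 1 then (if j <= p then j + p else j - p.+1)
  else if a == 2 then (if j <= p then 2*p - 2*j else 4*p+1 - 2*j)
  else if odd a then j else 2*p - j.

Definition heven p a j :=
  if a == 0 then tau p j else if odd a then 2*p - j else j.

Definition g p n := if odd n then hodd p else heven p.

Lemma g_lt p n a j : j < (2*p).+1 -> g p n a j < (2*p).+1.
Proof.
move=> hj; rewrite /g /hodd /heven.
by repeat case: ifP => ? //; try lia; apply: tau_lt.
Qed.

Lemma g_inj p n a j j' : j < (2*p).+1 -> j' < (2*p).+1 ->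
  g p n a j = g p n a j' -> j = j'.
Proof.
move=> hj hj'; rewrite /g /hodd /heven.
have T : tau p j = tau p j' -> j = j'.
  by move=> e; rewrite -(tau_inv hj) e tau_inv.
by repeat case: ifP => ? //; lia.
Qed.

Lemma hodd3 p a j : 3 <= a -> hodd p a j = if odd a then j else 2*p - j.
Proof. by case: a => [|[|[|a]]]. Qed.

Lemma heven1 p a j : 1 <= a -> heven p a j = if odd a then 2*p - j else j.
Proof. by case: a. Qed.

Lemma sum_hodd p k j : j <= 2*p ->
  \sum_(a < 3 + 2*k) hodd p a j + j = tau p j + 3*p + k*(2*p).
Proof.
move=> hj; elim: k => [|k IH].
  rewrite !big_ord_recr big_ord0 /= /hodd /=.
  by repeat case: ifP => ? //; lia.
rewrite (_ : 3 + 2*k.+1 = (3+2*k).+2); last by lia.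
rewrite 2!big_ord_recr /=.
rewrite hodd3; last by lia.
rewrite hodd3; last by lia.
have -> : odd (3 + 2*k) by rewrite oddD oddM.
have -> : odd (3 + 2*k).+1 = false by rewrite /= oddD oddM.
rewrite [k.+1 * _]mulSn. move: IH.
set s := (\sum_(a < 3 + 2*k) hodd p a j). lia.
Qed.

Lemma sum_heven p k j : j <= 2*p ->
  \sum_(a < 2 + 2*k) heven p a j + j = tau p j + 2*p + k*(2*p).
Proof.
move=> hj; elim: k => [|k IH].
  rewrite !big_ord_recr big_ord0 /= /heven /=; lia.
rewrite (_ : 2 + 2*k.+1 = (2+2*k).+2); last by lia.
rewrite 2!big_ord_recr /=.
rewrite heven1; last by lia.
rewrite heven1; last by lia.
have -> : odd (2 + 2*k) = false by rewrite oddD oddM.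
have -> : odd (2 + 2*k).+1 by rewrite /= oddD oddM.
rewrite [k.+1 * _]mulSn. move: IH.
set s := (\sum_(a < 2 + 2*k) heven p a j). lia.
Qed.

Lemma sum_g p n : 3 <= n -> exists G, forall j, j <= 2*p ->
  \sum_(a < n) g p n a j + j = tau p j + G.
Proof.
move=> hn; rewrite /g; case: ifP => hod.
  have [k ->] : exists k, n = 3 + 2*k.
    exists ((n-3)./2); move: (odd_double_half (n-3)).
    rewrite oddB // hod /= -muln2; lia.
  exists (3*p + k*(2*p)) => j hj; rewrite sum_hodd //; lia.
have [k ->] : exists k, n = 2 + 2*k.
  exists ((n-2)./2); move: (odd_double_half (n-2)).
  rewrite oddB; last by lia.
  rewrite hod /= -muln2; lia.
exists (2*p + k*(2*p)) => j hj; rewrite sum_heven //; lia.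
Qed.

Definition sc p i := if i.+1 == (2*p).+1 then 0 else i.+1.
Definition pr p i := if i == 0 then 2*p else i.-1.
Definition E p j := (tau p j).+1 - j.
Definition V p i := E p (sc p i) + E p (pr p i).

Lemma Espec p x : x < (2*p).+1 ->
  (x %% 4 = 0 /\ x.+1 < (2*p).+1 /\ E p x = 2) \/ (x %% 4 = 1 /\ E p x = 0) \/
  (~ (x %% 4 = 0 /\ x.+1 < (2*p).+1) /\ x %% 4 <> 1 /\ E p x = 1).
Proof. rewrite /E /tau; repeat case: ifP; lia. Qed.

Lemma scspec p i : i < (2*p).+1 ->
  (i = 2*p /\ sc p i = 0) \/ (i < 2*p /\ sc p i = i.+1).
Proof. rewrite /sc; case: ifP; lia. Qed.

Lemma prspec p i : i < (2*p).+1 ->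
  (i = 0 /\ pr p i = 2*p) \/ (0 < i /\ pr p i = i.-1).
Proof. rewrite /pr; case: ifP; lia. Qed.

Lemma sc_lt p i : sc p i < (2*p).+1 \/ i >= (2*p).+1.
Proof. rewrite /sc; case: ifP; lia. Qed.

Lemma pr_lt p i : i < (2*p).+1 -> pr p i < (2*p).+1.
Proof. rewrite /pr; case: ifP; lia. Qed.

Lemma V_range p i : i < (2*p).+1 -> 1 <= V p i <= 3.
Proof.
move=> hi; rewrite /V.
have := scspec hi; have := prspec hi.
have h1 := pr_lt hi. have h2 := sc_lt p i.
have := Espec h1.
case: h2 => h2; last by lia.
have := Espec h2. lia.
Qed.

Lemma pr_sc p i : i < (2*p).+1 -> pr p (sc p i) = i.
Proof. rewrite /pr /sc; repeat case: ifP; lia. Qed.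

Lemma V_adj p i : 2 <= p -> i < (2*p).+1 -> V p i <> V p (sc p i).
Proof.
move=> hp hi; rewrite /V pr_sc //.
have := scspec hi; have := prspec hi.
have h1 := pr_lt hi. have [h2|] := sc_lt p i; last by lia.
have [h3|] := sc_lt p (sc p i); last by lia.
have := scspec h2; have := prspec h2.
have := Espec h1; have := Espec h2; have := Espec h3; have := Espec hi.
move=> e1 e2 e3 e4 s1 s2 s3 s4.
repeat match goal with H : _ \/ _ |- _ => destruct H end; lia.
Qed.

Lemma V0 p : 2 <= p -> V p 0 = 1.
Proof.
move=> hp; have h0 : 0 < (2*p).+1 by [].
have := scspec h0; have := prspec h0; move=> hpr hsc.
rewrite /V.
have hs : sc p 0 < (2*p).+1 by lia.
have hq := pr_lt h0.
have := Espec hs; have := Espec hq; lia.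
Qed.

Lemma V1 p : 2 <= p -> V p 1 = 3.
Proof.
move=> hp; have h0 : 1 < (2*p).+1 by lia.
have := scspec h0; have := prspec h0; move=> hpr hsc.
rewrite /V.
have hs : sc p 1 < (2*p).+1 by lia.
have hq := pr_lt h0.
have := Espec hs; have := Espec hq; lia.
Qed.

Lemma V2 p : 2 <= p -> exists i, i < (2*p).+1 /\ V p i = 2.
Proof.
move=> hp; case: (boolP ((2*p).+1 %% 4 == 3)) => H.
  exists (2*p); split; first by lia.
  have h0 : 2*p < (2*p).+1 by [].
  have := scspec h0; have := prspec h0; move=> hpr hsc.
  rewrite /V.
  have hs : sc p (2*p) < (2*p).+1 by lia.
  have hq := pr_lt h0.
  have := Espec hs; have := Espec hq; lia.
exists (2*p).-1; split; first by lia.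
have h0 : (2*p).-1 < (2*p).+1 by lia.
have := scspec h0; have := prspec h0; move=> hpr hsc.
rewrite /V.
have hs : sc p (2*p).-1 < (2*p).+1 by lia.
have hq := pr_lt h0.
have := Espec hs; have := Espec hq; lia.
Qed.

Lemma modS p k : k < (2*p).+1 -> k.+1 %% (2*p).+1 = sc p k.
Proof.
rewrite /sc; case: ifP => [/eqP ->|h hk]; first by rewrite modnn.
rewrite modn_small //; lia.
Qed.

Lemma sc_pr p i j : i < (2*p).+1 -> j < (2*p).+1 ->
  (i == sc p j) = (j == pr p i).
Proof.
move=> hi hj; rewrite /sc /pr.
case: ifP => h1; case: ifP => h2; apply/eqP/eqP; lia.
Qed.

Lemma nb_sum p (F : nat -> nat) (i : 'I_(2*p).+1) : 2 <= p ->
  \sum_(j : 'I_(2*p).+1 | cycle_rel i j) F j = F (sc p i) + F (pr p i).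
Proof.
move=> hp.
have hi := ltn_ord i.
have [hs|] := sc_lt p i; last by lia.
have hq := pr_lt hi.
pose js : 'I_(2*p).+1 := Ordinal hs.
pose jq : 'I_(2*p).+1 := Ordinal hq.
have neq : sc p i <> pr p i.
  have := scspec hi; have := prspec hi; lia.
have rel_iff : forall j : 'I_(2*p).+1, cycle_rel i j = (j == js) || (j == jq).
  move=> j; rewrite /cycle_rel !modS ?ltn_ord // (@sc_pr p i j) ?ltn_ord //.
have -> : \sum_(j : 'I_(2*p).+1 | cycle_rel i j) F j =
          \sum_(j : 'I_(2*p).+1 | (j == js) || (j == jq)) F j.
  by apply: eq_bigl => j; rewrite rel_iff.
rewrite (bigD1 js) /=; last by rewrite eqxx.
rewrite (big_pred1 jq) //.
move=> j /=; case: (j =P js) => [->|] /=.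
  apply/esym/negbTE; apply/eqP => e; apply: neq.
  by have := congr1 val e.
by move=> _; rewrite andbT.
Qed.

Definition lab p n (x : 'I_(2*p).+1 * 'I_n) : nat :=
  x.2 * (2*p).+1 + g p n x.2 x.1 + 1.

Definition Snat p n j := \sum_(a < n) (a * (2*p).+1 + g p n a j + 1).

Lemma lab_is p n : is_labeling (@lab p n).
Proof.
split.
  move=> [i a] [i' a']; rewrite /lab /= => e.
  have gi := g_lt n a (ltn_ord i).
  have gi' := g_lt n a' (ltn_ord i').
  have ea : a = a'.
    apply: val_inj => /=.
    have : (a * (2*p).+1 + g p n a i) %/ (2*p).+1 =
           (a' * (2*p).+1 + g p n a' i') %/ (2*p).+1 by congr (_ %/ _); lia.
    by rewrite !divnMDl // !divn_small // !addn0.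
  subst a'.
  have ei : val i = val i'.
    apply: (@g_inj p n a) => //; rewrite ?ltn_ord //; apply/eqP; move/eqP: e; by rewrite eqn_add2r eqn_add2l.
  by rewrite (val_inj ei).
move=> [i a]; rewrite /lab /= card_prod !card_ord.
have gi := g_lt n a (ltn_ord i).
have ha := ltn_ord a.
apply/andP; split; first by lia.
have : a * (2*p).+1 + (2*p).+1 <= n * (2*p).+1.
  by rewrite addnC -mulSn leq_mul2r ha orbT.
lia.
Qed.

Lemma weight_lab p n (u : 'I_(2*p).+1 * 'I_n) : 2 <= p ->
  weight (lex_prod (@cycle_rel (2*p).+1) (@empty_rel n)) (@lab p n) u =
  Snat p n (sc p u.1) + Snat p n (pr p u.1).
Proof.
move=> hp; rewrite /weight.
rewrite (eq_bigl (fun x : 'I_(2*p).+1 * 'I_n => cycle_rel u.1 x.1)); last first.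
  by move=> x; rewrite /lex_prod /empty_rel andbF orbF.
transitivity (\sum_(j | cycle_rel u.1 j) \sum_(a < n) @lab p n (j, a)).
  rewrite pair_big_dep; apply: eq_big => [[j a]|[j a] _] //=; by rewrite andbT.
exact: (@nb_sum p (Snat p n) u.1 hp).
Qed.

Lemma Snat_eq p n : 3 <= n -> exists K, forall j, j < (2*p).+1 ->
  Snat p n j + 1 = K + E p j.
Proof.
move=> hn; have [G HG] := sum_g p hn.
exists (\sum_(a < n) a * (2*p).+1 + n + G) => j hj.
rewrite /Snat !big_split /= sum1_card card_ord.
have := HG j; have := tau_ge p j; rewrite /E.
set s1 := \sum_(a < n) g p n a j; set s2 := \sum_(a < n) a * (2*p).+1; lia.
Qed.

Lemma lower p n (f : 'I_(2*p).+1 * 'I_n -> nat) : 2 <= p -> 0 < n ->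
  (forall u v, lex_prod (@cycle_rel (2*p).+1) (@empty_rel n) u v ->
     weight (lex_prod (@cycle_rel (2*p).+1) (@empty_rel n)) f u !=
     weight (lex_prod (@cycle_rel (2*p).+1) (@empty_rel n)) f v) ->
  3 <= num_weights (lex_prod (@cycle_rel (2*p).+1) (@empty_rel n)) f.
Proof.
move=> hp hn Hadj.
set w := weight (lex_prod (@cycle_rel (2*p).+1) (@empty_rel n)) f.
pose b0 : 'I_n := Ordinal hn.
pose c k := w (inord k, b0).
have adj k : k < (2*p).+1 -> c k != c (sc p k).
  move=> hk; apply: Hadj; rewrite /lex_prod /=; apply/orP; left.
  have [hs|] := sc_lt p k; last by lia.
  by rewrite /cycle_rel /= !inordK // modS // eqxx.
rewrite /num_weights -/w; set s := undup _.
rewrite leqNgt; apply/negP => Hlt.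
have mem k : c k \in s.
  by rewrite mem_undup; apply: map_f; rewrite mem_enum.
have e1 : sc p 0 = 1 by rewrite /sc; case: ifP; lia.
have c01 : c 0 != c 1 by have := adj 0 (ltn0Sn _); rewrite e1.
have two k : c k = c 0 \/ c k = c 1.
  case: (eqVneq (c k) (c 0)) => [|h0]; first by left.
  case: (eqVneq (c k) (c 1)) => [|h1]; first by right.
  exfalso.
  have : size [:: c 0; c 1; c k] <= size s.
    apply: uniq_leq_size.
      by rewrite /= !inE negb_or c01 eq_sym h0 eq_sym h1.
    by move=> x; rewrite !inE => /or3P [] /eqP ->; apply: mem.
  move: Hlt => /=; lia.
have alt k : k < (2*p).+1 -> c k = if odd k then c 1 else c 0.
  elim: k => [|k IH] hk; first by [].
  have hk' : k < (2*p).+1 by lia.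
  have := adj k hk'; rewrite (_ : sc p k = k.+1); last by rewrite /sc; case: ifP; lia.
  rewrite IH //= => H.
  case: (two k.+1) => E; rewrite E in H *; case: (odd k) H => /=; rewrite ?eqxx //.
have := adj (2*p) (ltnSn _).
rewrite (_ : sc p (2*p) = 0); last by rewrite /sc eqxx.
by rewrite alt // oddM /= eqxx.
Qed.

Theorem mainTheorem14 (m n : nat) :
  5 <= m -> odd m -> 3 <= n ->
  chi_ld_eq (@lex_prod (ordinal m) (ordinal n) (@cycle_rel m) (@empty_rel n)) 3.
Proof.
move=> hm hodd hn.
have [p hpm] : exists p, m = (2*p).+1.
  exists m./2; move: (odd_double_half m); rewrite hodd /= -muln2; lia.
subst m. have p2 : 2 <= p by lia.
have hn0 : 0 < n by lia.
have [K HK] := Snat_eq p hn.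
have Wspec x : x < (2*p).+1 ->
    Snat p n (sc p x) + Snat p n (pr p x) + 2 = 2*K + V p x.
  move=> hx; have [hs|] := sc_lt p x; last by lia.
  have := HK _ hs; have := HK _ (pr_lt hx); rewrite /V; lia.
set e := lex_prod (@cycle_rel (2*p).+1) (@empty_rel n).
split; last first.
  move=> f [_ Hadj]; exact: lower.
exists (@lab p n).
have Ww u : weight e (@lab p n) u + 2 = 2*K + V p u.1.
  by rewrite /e weight_lab //; apply: Wspec.
split.
  split; first exact: lab_is.
  move=> u v huv; apply/eqP => EW.
  have EV : 2*K + V p u.1 = 2*K + V p v.1 by rewrite -!Ww EW.
  move: huv.
  rewrite /e /lex_prod /empty_rel andbF orbF /cycle_rel.
  rewrite !modS ?ltn_ord // => /orP [] /eqP huv.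
    have huv' : nat_of_ord v.1 = sc p (nat_of_ord u.1) := huv.
    have := V_adj p2 (ltn_ord u.1); rewrite -huv'.
    lia.
  have huv' : nat_of_ord u.1 = sc p (nat_of_ord v.1) := huv.
  have := V_adj p2 (ltn_ord v.1); rewrite -huv'.
  lia.
have [i2 [hi2 V2i]] := V2 p2.
have h1 : 1 < (2*p).+1 by lia.
pose b0 : 'I_n := Ordinal hn0.
pose u0 : 'I_(2*p).+1 * 'I_n := (ord0, b0).
pose u1 : 'I_(2*p).+1 * 'I_n := (Ordinal h1, b0).
pose u2 : 'I_(2*p).+1 * 'I_n := (Ordinal hi2, b0).
have W0 := Ww u0; have W1 := Ww u1; have W2 := Ww u2.
rewrite /= V0 // in W0; rewrite /= V1 // in W1; rewrite /= V2i in W2.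
rewrite /num_weights.
set w := weight e (@lab p n) in Ww W0 W1 W2 *.
set s := undup _.
have Hp : perm_eq s [:: w u0; w u1; w u2].
  apply: uniq_perm; first exact: undup_uniq.
    rewrite /= !inE; apply/andP; split; [rewrite negb_or|]; apply/andP; split;
      apply/eqP; lia.
  move=> x; rewrite mem_undup; apply/mapP/idP => [[u _ ->]|].
    rewrite !inE; have := Ww u; have := V_range (ltn_ord u.1).
    case/andP => ha hb; move=> hu.
    set vv := V p u.1 in ha hb hu.
    apply/orP; case: (ltngtP vv 2) => hv.
      left; apply/eqP; lia.
      right; apply/orP; left; apply/eqP; lia.
    right; apply/orP; right; apply/eqP; lia.
  by rewrite !inE => /or3P [] /eqP ->; eexists; rewrite ?mem_enum.
by rewrite (perm_size Hp).
Qed.
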